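(* Let $p$ be a prime, $a\ge 1$ an integer, and $n=p^a$. With $L$ and $R$ the matrices indexed by $P(n)$ defined in the context, \[\dim\ker (pR+L)\ge a.\]
   Context: Let $\phi$ denote Euler's totient function. For a positive integer $n$ let $P(n)=\{(i,j): j\mid n,\ i\mid j\}$. Define square matrices $L$ and $R$ with rows and columns indexed by $P(n)$ as follows. For a row index $(i,j)$ and a column index $(d,c)$: $L_{(i,j)}^{(d,c)} = \phi(d)\,\frac{n}{\operatorname{lcm}(j,c)}$ if $d\mid i$ and $j\mid \operatorname{lcm}(i,c)$, and $0$ otherwise. For the row $(i,j)$, let $v$ be the largest divisor of $i$ coprime with $j/i$ and put $u=i/v$. Then $R_{(i,j)}^{(e,c)} = u\,\phi(ev/j)\,\frac{n}{\operatorname{lcm}(j,c)}$ if $(j/v)\mid e$, $e\mid j$ and $j\mid\operatorname{lcm}(i,c)$, and $0$ otherwise. Here $\ker(pR+L)$ may be taken as the left kernel (space of row vectors $w$ with $w(pR+L)=0$); its dimension equals that of the right kernel. *)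

(* Defs.v *)
From mathcomp Require Import all_boot all_algebra.
Set Implicit Arguments. Unset Strict Implicit. Unset Printing Implicit Defensive.
Import GRing.Theory.
Local Open Scope ring_scope.

(* Matrices indexed by P(n) are 'M_(size (Pidx n)), the k-th index
   corresponding to the pair nth (0,0) (Pidx n) k. *)
Definition Pidx (n : nat) : seq (nat * nat) :=
  [seq (i, j) | j <- divisors n, i <- divisors j].

Definition Lentry (n : nat) (r s : nat * nat) : rat :=
  let: (i, j) := r in let: (d, c) := s in
  if ((d %| i) && (j %| lcmn i c))%N then ((totient d * (n %/ lcmn j c))%N)%:R else 0.

Definition vpart (i j : nat) : nat :=
  (\max_(d <- divisors i | coprime d (j %/ i)) d)%N.

Definition Rentry (n : nat) (r s : nat * nat) : rat :=
  let: (i, j) := r in let: (e, c) := s in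
  let v := vpart i j in let u := (i %/ v)%N in
  if [&& ((j %/ v) %| e)%N, (e %| j)%N & (j %| lcmn i c)%N]
  then ((u * totient ((e * v) %/ j)%N * (n %/ lcmn j c))%N)%:R else 0.

Definition Lmx (n : nat) : 'M[rat]_(size (Pidx n)) :=
  \matrix_(r, s) Lentry n (nth (0, 0)%N (Pidx n) r) (nth (0, 0)%N (Pidx n) s).

Definition Rmx (n : nat) : 'M[rat]_(size (Pidx n)) :=
  \matrix_(r, s) Rentry n (nth (0, 0)%N (Pidx n) r) (nth (0, 0)%N (Pidx n) s).

(* Main.v *)
Require Import Defs.
From mathcomp Require Import all_boot all_algebra.
From mathcomp Require Import zify ring.
Set Implicit Arguments. Unset Strict Implicit. Unset Printing Implicit Defensive.
Import GRing.Theory Num.Theory.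
Local Open Scope ring_scope.

Section S.
Local Open Scope nat_scope.
Variables (p : nat) (hp : prime p).
Let p1 : (1 < p)%N. Proof. exact: prime_gt1. Qed.
Let p0 : (0 < p)%N. Proof. exact: prime_gt0. Qed.

Lemma dvd_pp x y : (p ^ x %| p ^ y)%N = (x <= y)%N.
Proof. exact: dvdn_Pexp2l. Qed.

Lemma lcm_pp x y : lcmn (p ^ x) (p ^ y) = p ^ maxn x y.
Proof.
case: (leqP x y) => h.
  by apply/lcmn_idPr; rewrite dvd_pp.
apply/lcmn_idPl; rewrite dvd_pp; exact: ltnW.
Qed.

Lemma div_pp x y : (y <= x)%N -> (p ^ x %/ p ^ y = p ^ (x - y))%N.
Proof. by move=> h; rewrite expnB. Qed.

Lemma vpart_diag x : vpart (p ^ x) (p ^ x) = (p ^ x)%N.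
Proof.
rewrite /vpart divnn expn_gt0 p0 /=.
apply/eqP; rewrite eqn_leq; apply/andP; split.
  apply/bigmax_leqP_seq => d; rewrite -dvdn_divisors ?expn_gt0 ?p0 // => hd _.
  by apply: dvdn_leq; rewrite ?expn_gt0 ?p0.
apply: (leq_bigmax_seq (F := id)); last by rewrite coprimen1.
by apply: divisors_id; rewrite expn_gt0 p0.
Qed.

Lemma vpart_off x : vpart (p ^ x) (p ^ x.+1) = 1%N.
Proof.
rewrite /vpart expnS mulnK ?expn_gt0 ?p0 //.
apply/eqP; rewrite eqn_leq; apply/andP; split.
  apply/bigmax_leqP_seq => d; rewrite -dvdn_divisors ?expn_gt0 ?p0 // => /dvdn_pfactor.
  case/(_ hp) => k _ ->; case: k => [|k]; first by rewrite expn0.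
  by rewrite coprime_pexpl // /coprime gcdnn; case: (p) p1 => [|[|]].
apply: (leq_bigmax_seq (F := id)); first exact: divisor1.
exact: coprime1n.
Qed.

Lemma Ldiag a m d g : (m <= a) -> (g <= a) ->
  Lentry (p ^ a) (p ^ m, p ^ m) (p ^ d, p ^ g) =
  if d <= m then ((totient (p ^ d) * p ^ (a - maxn m g))%N)%:R else 0%R.
Proof.
move=> ma ga; rewrite /Lentry !lcm_pp !dvd_pp leq_maxl andbT div_pp //.
by rewrite geq_max ma.
Qed.

Lemma Rdiag a m d g : (m <= a) -> (g <= a) -> (d <= g) ->
  Rentry (p ^ a) (p ^ m, p ^ m) (p ^ d, p ^ g) =
  if d <= m then ((totient (p ^ d) * p ^ (a - maxn m g))%N)%:R else 0%R.
Proof.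
move=> ma ga dg; rewrite /Rentry vpart_diag divnn expn_gt0 p0 dvd1n /=.
rewrite !lcm_pp !dvd_pp leq_maxl andbT div_pp ?geq_max ?ma // mulnK ?expn_gt0 ?p0 //.
by rewrite mul1n.
Qed.

Lemma Loff a m d g : (m < a) -> (g <= a) ->
  Lentry (p ^ a) (p ^ m, p ^ m.+1) (p ^ d, p ^ g) =
  if (d <= m) && (m < g) then ((totient (p ^ d) * p ^ (a - maxn m.+1 g))%N)%:R else 0%R.
Proof.
move=> ma ga; rewrite /Lentry !lcm_pp !dvd_pp leq_max ltnn /= div_pp //.
by rewrite geq_max ma.
Qed.

Lemma Roff a m d g : (m < a) -> (g <= a) ->
  Rentry (p ^ a) (p ^ m, p ^ m.+1) (p ^ d, p ^ g) =
  if (d == m.+1) && (m < g) then ((p ^ m * p ^ (a - maxn m.+1 g))%N)%:R else 0%R.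
Proof.
move=> ma ga; rewrite /Rentry vpart_off !divn1 muln1.
rewrite !lcm_pp !dvd_pp leq_max ltnn /= (@div_pp a) ?geq_max ?ma //.
case: eqP => [->|ne]; last first.
  case: ifP => // H; exfalso; move: H => /and3P[h1 h2 _].
  by case: ne; apply/eqP; rewrite eqn_leq h1 h2.
rewrite !leqnn /= divnn expn_gt0 p0 /=.
by case: ifP => //; rewrite muln1.
Qed.

Definition E a x y : rat := (p%:R * Rentry (p ^ a) x y + Lentry (p ^ a) x y)%R.

Lemma key a m d g : m < a -> d <= g -> g <= a ->
  let c := (p ^ d, p ^ g) in
  let x1 := (p ^ m.+1, p ^ m.+1) in let x2 := (p ^ m, p ^ m.+1) in
  let x3 := (p ^ m, p ^ m) in
  (p%:R * E a x1 c - (p%:R ^+ 2 - 1) * E a x2 c - E a x3 c = 0 :> rat)%R.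
Proof.
move=> ma dg ga c x1 x2 x3; rewrite /c /x1 /x2 /x3 /E Rdiag ?Ldiag ?Roff ?Loff ?Rdiag ?Ldiag //; try lia.
case: (leqP g m) => hg.
  have -> : (d <= m) = true by apply/idP; lia.
  have -> : (d <= m.+1) = true by apply/idP; lia.
  have HH : maxn m.+1 g = m.+1 by lia.
  rewrite HH.
  rewrite !andbF.
  have -> : a - m = (a - m.+1).+1 by lia.
  rewrite !natrM !natrX [_ ^+ (a - m.+1).+1]exprS; ring.
have HH : maxn m.+1 g = g by lia.
rewrite HH.
rewrite !andbT.
case: (ltngtP d m.+1) => hd.
- have -> : (d <= m) = true by apply/idP; lia.
  rewrite !natrM; ring.
- have -> : (d <= m) = false by apply/negbTE; lia.
  rewrite ?natrM; ring.
- have -> : (d <= m) = false by apply/negbTE; lia.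
  rewrite hd totient_pfactor //= !natrM !natrX -subn1 natrB //.
  ring.
Qed.
End S.

Definition gv (p i : nat) (y : nat * nat) : rat :=
  (y == (p ^ i.+1, p ^ i.+1)%N)%:R * p%:R - (y == (p ^ i, p ^ i.+1)%N)%:R * (p%:R ^+ 2 - 1)
  - (y == (p ^ i, p ^ i)%N)%:R.

Lemma sum_nth (s : seq (nat * nat)) (F : nat * nat -> rat) :
  \sum_(r < size s) F (nth (0, 0)%N s r) = \sum_(x <- s) F x.
Proof. by rewrite (big_nth (0, 0)%N) big_mkord. Qed.

Lemma sum_pick (s : seq (nat * nat)) b (F : nat * nat -> rat) :
  uniq s -> b \in s -> \sum_(y <- s) (y == b)%:R * F y = F b.
Proof.
move=> us bs; rewrite (big_rem b) //= eqxx mul1r big1_seq ?addr0 //.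
move=> y /andP[_ hy]; have /negbTE -> : y != b.
  by apply: contraTneq hy => ->; rewrite mem_rem_uniqF.
by rewrite mul0r.
Qed.

Lemma sum_g (s : seq (nat * nat)) p i (G : nat * nat -> rat) :
  uniq s -> (p ^ i.+1, p ^ i.+1)%N \in s -> (p ^ i, p ^ i.+1)%N \in s ->
  (p ^ i, p ^ i)%N \in s ->
  \sum_(y <- s) gv p i y * G y =
  p%:R * G (p ^ i.+1, p ^ i.+1)%N - (p%:R ^+ 2 - 1) * G (p ^ i, p ^ i.+1)%N
  - G (p ^ i, p ^ i)%N.
Proof.
move=> us h1 h2 h3.
transitivity (\sum_(y <- s) ((y == (p ^ i.+1, p ^ i.+1)%N)%:R * (p%:R * G y)
   - (y == (p ^ i, p ^ i.+1)%N)%:R * ((p%:R ^+ 2 - 1) * G y)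
   - (y == (p ^ i, p ^ i)%N)%:R * G y)).
  by apply: eq_bigr => y _; rewrite /gv; ring.
by rewrite !sumrB !sum_pick.
Qed.

Lemma Pidx_uniq n : uniq (Pidx n).
Proof.
apply: allpairs_uniq_dep; first exact: divisors_uniq.
  by move=> x _; exact: divisors_uniq.
by move=> [j i] [j' i'] _ _ /= [-> ->].
Qed.

Lemma Pidx_mem p a x y : prime p -> (x <= y)%N -> (y <= a)%N ->
  (p ^ x, p ^ y)%N \in Pidx (p ^ a).
Proof.
move=> hp xy ya; apply/allpairsPdep; exists (p ^ y)%N, (p ^ x)%N; split => //.
  by rewrite -dvdn_divisors ?expn_gt0 ?prime_gt0 // dvd_pp.
by rewrite -dvdn_divisors ?expn_gt0 ?prime_gt0 // dvd_pp.
Qed.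

Lemma Pidx_form p a z : prime p -> z \in Pidx (p ^ a) ->
  exists d g, [/\ (d <= g)%N, (g <= a)%N & z = (p ^ d, p ^ g)%N].
Proof.
move=> hp /allpairsPdep [j [i [hj hi ->]]].
have pa : (0 < p ^ a)%N by rewrite expn_gt0 prime_gt0.
move: hj; rewrite -dvdn_divisors // => /(dvdn_pfactor _ _ hp) [g ga ej]; subst j.
move: hi; rewrite -dvdn_divisors ?expn_gt0 ?prime_gt0 // => /(dvdn_pfactor _ _ hp) [d dg ->].
by exists d, g.
Qed.

Theorem proposition5p2 (p a : nat) (hp : prime p) (ha : (1 <= a)%N) :
  (a <= \rank (kermx ((p%:R : rat) *: Rmx (p ^ a) + Lmx (p ^ a))))%N.
Proof.
set A := (_ *: _ + _).
set s := Pidx (p ^ a).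
pose W : 'M[rat]_(a, size s) := \matrix_(i, r) gv p i (nth (0, 0)%N s r).
pose S : 'M[rat]_(size s, a) := \matrix_(r, j) ((nth (0, 0)%N s r == (p ^ j, p ^ j.+1)%N)%:R).
have us : uniq s by exact: Pidx_uniq.
have WA : W *m A = 0.
  apply/matrixP => i c; rewrite !mxE.
  have : nth (0, 0)%N s c \in s by apply: mem_nth.
  case/(Pidx_form hp) => d [g [dg ga ec]].
  transitivity (\sum_(r < size s) (fun y => gv p i y * E p a y (nth (0, 0)%N s c)) (nth (0, 0)%N s r)).
    by apply: eq_bigr => r _; rewrite !mxE /E.
  have ia : (i < a)%N := ltn_ord i.
  rewrite (sum_nth s (fun y => gv p i y * E p a y (nth (0, 0)%N s c))) sum_g // ?Pidx_mem // ?ec; try lia.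
  exact: key.
have WS : W *m S = (- (p%:R ^+ 2 - 1))%:M.
  apply/matrixP => i j; rewrite !mxE.
  transitivity (\sum_(r < size s) (fun y => (y == (p ^ j, p ^ j.+1)%N)%:R * gv p i y) (nth (0, 0)%N s r)).
    by apply: eq_bigr => r _; rewrite !mxE mulrC.
  have ja : (j < a)%N := ltn_ord j.
  rewrite (sum_nth s (fun y => (y == (p ^ j, p ^ j.+1)%N)%:R * gv p i y)) sum_pick ?Pidx_mem //; try lia.
  have p1 := prime_gt1 hp.
  rewrite /gv !xpair_eqE !eqn_exp2l //.
  have -> : ((j : nat) == i.+1) && (j.+1 == i.+1) = false by apply/negbTE; lia.
  have -> : ((j : nat) == i) && (j.+1 == i) = false by apply/negbTE; lia.
  rewrite eqSS andbb; case: (eqVneq i j) => [->|ne].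
    by rewrite !eqxx /= ?mulr1n ?mulr0n; ring.
  have -> : ((j : nat) == i) = false.
    by apply/negbTE; apply: contra ne => /eqP h; apply/eqP; apply: val_inj.
  rewrite -[false%:R]/(0 : rat) -[_ *+ false]/(0 : rat); ring.
have c0 : (- (p%:R ^+ 2 - 1) : rat) != 0.
  rewrite oppr_eq0 subr_eq0 -natrX pnatr_eq1.
  have p1 := prime_gt1 hp; apply/eqP => h.
  have : (p * 1 < p * p)%N by rewrite ltn_pmul2l ?prime_gt0.
  by rewrite muln1 mulnn h; lia.
have rWS : \rank (W *m S) = a.
  by rewrite WS -scalemx1 mxrank_scale_nz // mxrank1.
apply: (@leq_trans (\rank W)).
  by rewrite -{1}rWS mxrankM_maxl.
by apply: mxrankS; apply/sub_kermxP.
Qed.
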